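(* Let $D$ be a tournament missing disjoint paths of length 2, and let $C=a_1b_1c_1,\dots,a_kb_kc_k$ be a double cycle in $\Delta(D)$. Then there exists $t\in\{1,\dots,k\}$ such that $|N^+_{D[K(C)]}(b_t)|\le|N^{++}_{D[K(C)]}(b_t)|$.
   Context: All digraphs are finite oriented graphs; $D[X]$ is the subdigraph induced by $X$. $N^+_H(v)$ is the out-neighborhood in $H$; $N^{++}_H(v)$ is the set of vertices $w\notin N_H^+(v)\cup\{v\}$ with $u\to w$ in $H$ for some $u\in N_H^+(v)$. A missing edge is a pair of distinct non-adjacent vertices; the missing graph is formed by the missing edges. $D$ is a tournament missing disjoint paths of length 2 if its missing graph is a vertex-disjoint union of paths each with exactly two edges. For missing edges $\{x,y\},\{a,b\}$, $\{x,y\}$ loses to $\{a,b\}$ (written $xy\to ab$) if the endpoints can be labelled so that $x\to a$, $b\notin N^+(x)\cup N^{++}(x)$, $y\to b$, $a\notin N^+(y)\cup N^{++}(y)$ (neighborhoods in $D$). $\Delta(D)$ has the missing edges as vertices and arcs $(e,e')$ whenever $e$ loses to $e'$. For missing paths $abc$, $xyz$ (edges $ab,bc$ and $xy,yz$), $abc\to xyz$ means each of $ab,bc$ loses to each of $xy,yz$. A double cycle is a sequence $C=a_1b_1c_1,\dots,a_kb_kc_k$ ($k\ge2$) of distinct missing paths of length 2 (components of the missing graph) with $a_ib_ic_i\to a_{i+1}b_{i+1}c_{i+1}$ for all $i$, indices modulo $k$. $K(C)=\{a_i,b_i,c_i: 1\le i\le k\}$. *)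

(* Defs.v *)
From mathcomp Require Import all_boot.
Set Implicit Arguments. Unset Strict Implicit. Unset Printing Implicit Defensive.

Section Digraph.
Variables (T : finType) (arc : rel T).

Definition oriented := (forall x, ~~ arc x x) /\ (forall x y, arc x y -> ~~ arc y x).

Definition outN (X : {set T}) (v : T) : {set T} :=
  [set w in X | (v \in X) && arc v w].
Definition outN2 (X : {set T}) (v : T) : {set T} :=
  [set w in X | [&& w \notin outN X v, w != v &
                 [exists u, (u \in outN X v) && arc u w]]].

Definition missing (x y : T) := [&& x != y, ~~ arc x y & ~~ arc y x].

(* a b c is a path with exactly the two missing edges ab, bc that forms a
   whole connected component of the missing graph *)
Definition mpath_comp (a b c : T) :=
  [&& a != b, b != c, a != c, missing a b, missing b c, ~~ missing a c &
      [forall u in [set a; b; c], forall w, missing u w ==> (w \in [set a; b; c])]].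

Definition tmdp :=
  oriented /\ forall x y, missing x y ->
    exists a b c, mpath_comp a b c /\ x \in [set a; b; c] /\ y \in [set a; b; c].

(* xy loses to ab, for one fixed labelling *)
Definition loses_lab (x y a b : T) :=
  [&& arc x a, b \notin outN setT x :|: outN2 setT x,
      arc y b & a \notin outN setT y :|: outN2 setT y].

Definition loses (x y a b : T) :=
  [|| loses_lab x y a b, loses_lab y x a b, loses_lab x y b a | loses_lab y x b a].

Definition path_loses (a b c x y z : T) :=
  [&& loses a b x y, loses a b y z, loses b c x y & loses b c y z].

(* C = a_0 b_0 c_0, ..., a_{k-1} b_{k-1} c_{k-1} is a double cycle *)
Definition double_cycle (k : nat) (a b c : nat -> T) :=
  [/\ 2 <= k,
      (forall i, i < k -> mpath_comp (a i) (b i) (c i)),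
      (forall i j, i < k -> j < k ->
         [set a i; b i; c i] = [set a j; b j; c j] -> i = j) &
      (forall i, i < k ->
         path_loses (a i) (b i) (c i) (a (i.+1 %% k)) (b (i.+1 %% k)) (c (i.+1 %% k)))].

Definition KC (k : nat) (a b c : nat -> T) : {set T} :=
  \bigcup_(i < k) [set a i; b i; c i].

End Digraph.

(* Main.v *)
Require Import Defs.
From mathcomp Require Import all_boot.
From mathcomp Require Import zify.
Set Implicit Arguments. Unset Strict Implicit. Unset Printing Implicit Defensive.

Section Proof.
Variables (T : finType) (arc : rel T) (k : nat) (a b c : nat -> T).
Hypothesis Htm : tmdp arc.
Hypothesis Hdc : double_cycle arc k a b c.

Lemma irr x : ~~ arc x x. Proof. by case: Htm => [[H _] _]. Qed.
Lemma asym x y : arc x y -> ~~ arc y x. Proof. by case: Htm => [[_ H] _]; apply: H. Qed.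
Lemma arc_neq x y : arc x y -> x != y.
Proof. move=> h; apply/eqP=> e; subst; by rewrite (negbTE (irr y)) in h. Qed.
Lemma asymF x y : arc x y -> arc y x -> False.
Proof. by move=> h1 h2; move: (asym h1); rewrite h2. Qed.

Lemma k2 : 2 <= k. Proof. by case: Hdc. Qed.
Lemma k0 : 0 < k. Proof. by have := k2; case: k. Qed.

Definition a' n := a (n %% k).
Definition b' n := b (n %% k).
Definition c' n := c (n %% k).
Definition Tr n := [set a' n; b' n; c' n].
Definition K := KC k a b c.

Lemma mp n : mpath_comp arc (a' n) (b' n) (c' n).
Proof. case: Hdc => _ H _ _; apply: H; exact: ltn_pmod k0. Qed.

Lemma cyc n : path_loses arc (a' n) (b' n) (c' n) (a' n.+1) (b' n.+1) (c' n.+1).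
Proof.
case: Hdc => _ _ _ H. have := H _ (ltn_pmod n k0).
have -> : (n %% k).+1 %% k = n.+1 %% k by rewrite -addn1 modnDml addn1.
by [].
Qed.

Lemma mp_ab n : missing arc (a' n) (b' n).
Proof. by case/and3P: (mp n) => _ _ /and5P []. Qed.
Lemma mp_bc n : missing arc (b' n) (c' n).
Proof. by case/and3P: (mp n) => _ _ /and5P []. Qed.
Lemma mp_ac n : a' n != c' n.
Proof. by case/and3P: (mp n) => _ _ /andP []. Qed.

Lemma inTa n : a' n \in Tr n. Proof. by rewrite /Tr !inE eqxx. Qed.
Lemma inTb n : b' n \in Tr n. Proof. by rewrite /Tr !inE eqxx ?orbT. Qed.
Lemma inTc n : c' n \in Tr n. Proof. by rewrite /Tr !inE eqxx ?orbT. Qed.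

Lemma closure n u w : u \in Tr n -> missing arc u w -> w \in Tr n.
Proof.
move=> hu hm. case/and3P: (mp n) => _ _ /and5P [_ _ _ _ /forallP H].
by have /implyP /(_ hu) /forallP /(_ w) /implyP := H u; apply.
Qed.

Lemma adj n u w : u \in Tr n -> w \notin Tr n -> arc u w || arc w u.
Proof.
move=> hu hw. have hm : ~~ missing arc u w.
  by apply/negP=> /(closure hu) h; rewrite h in hw.
have hne : u != w by apply/eqP=> e; subst; rewrite hu in hw.
move: hm; rewrite /missing hne /=. by rewrite negb_and !negbK.
Qed.

Lemma adjF n u w : u \in Tr n -> w \notin Tr n -> ~~ arc u w -> arc w u.
Proof. by move=> hu hw; case/orP: (adj hu hw) => [->|]. Qed.
Lemma adjF' n u w : u \in Tr n -> w \notin Tr n -> ~~ arc w u -> arc u w.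
Proof. by move=> hu hw; case/orP: (adj hu hw) => [|->]. Qed.

Lemma miss_sym x y : missing arc x y -> missing arc y x.
Proof. by case/and3P => h1 h2 h3; rewrite /missing eq_sym h1 h2 h3. Qed.

Lemma inTrP n x : x \in Tr n -> [\/ x = a' n, x = b' n | x = c' n].
Proof.
rewrite /Tr !inE => /orP [/orP [] /eqP ->|/eqP ->]; by [constructor 1|constructor 2|constructor 3].
Qed.

Lemma sub_Tr n m v : v \in Tr n -> v \in Tr m -> Tr n \subset Tr m.
Proof.
move=> hn hm.
have hab := mp_ab n; have hbc := mp_bc n.
have [ha hb hc] : [/\ a' n \in Tr m, b' n \in Tr m & c' n \in Tr m].
  case/inTrP: hn => e; subst v.
  - have hb := closure hm hab. by split => //; apply: closure hb hbc.
  - split => //; [apply: closure hm (miss_sym hab) | apply: closure hm hbc].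
  - have hb := closure hm (miss_sym hbc). by split => //; apply: closure hb (miss_sym hab).
by apply/subsetP => x /inTrP [] ->.
Qed.

Lemma disjS n x : x \in Tr n.+1 -> x \notin Tr n.
Proof.
move=> h1; apply/negP => h0.
have e : Tr n = Tr n.+1 by apply/eqP; rewrite eqEsubset (sub_Tr h0 h1) (sub_Tr h1 h0).
case: Hdc => h2 _ Hinj _.
have := Hinj (n %% k) (n.+1 %% k) (ltn_pmod n k0) (ltn_pmod n.+1 k0) e.
rewrite modnS; case: ifP => [hd|_]; last by lia.
move=> e'. have hkn : k %| n by rewrite /dvdn e'.
move: hd; rewrite -addn1 (dvdn_addr _ hkn) dvdn1 => /eqP ek. by rewrite ek in h2.
Qed.

Lemma disjS' n x : x \in Tr n -> x \notin Tr n.+1.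
Proof. by move=> h; apply/negP => /disjS; rewrite h. Qed.

Definition NN v q := q \notin outN arc setT v :|: outN2 arc setT v.

Lemma in_outT v w : (w \in outN arc setT v) = arc v w.
Proof. by rewrite !inE. Qed.

Lemma NN_arc v q : NN v q -> ~~ arc v q.
Proof. by rewrite /NN in_setU negb_or in_outT => /andP []. Qed.

Lemma dom u v w : arc u v -> NN v u -> arc v w -> ~~ arc w u.
Proof.
move=> huv hN hvw; apply/negP => hwu.
move: hN; rewrite /NN in_setU negb_or => /andP [h1 /negP]; apply.
rewrite inE in_setT /= h1 (arc_neq huv) /=.
by apply/existsP; exists w; rewrite in_outT hvw hwu.
Qed.

Lemma loses_swp u v p q : loses arc u v p q -> loses arc u v q p.
Proof.
move=> /or4P [] h; apply/or4P; [exact: Or43|exact: Or44|exact: Or41|exact: Or42].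
Qed.
Lemma loses_swuv u v p q : loses arc u v p q -> loses arc v u p q.
Proof.
move=> /or4P [] h; apply/or4P; [exact: Or42|exact: Or41|exact: Or44|exact: Or43].
Qed.

Lemma lG u v p q : loses arc u v p q -> arc v q -> [/\ arc u p, NN u q & NN v p].
Proof.
move=> H hvq; case/or4P: H => /and4P [h1 h2 h3 h4] //.
- by move: (NN_arc h2); rewrite hvq.
- by move: (NN_arc h4); rewrite hvq.
Qed.

Lemma lH u v p q : loses arc u v p q -> arc q v -> [/\ arc v p, NN v q, arc u q & NN u p].
Proof.
move=> H hqv; case/or4P: H => /and4P [h1 h2 h3 h4] //.
- by case: (asymF h3 hqv).
- by case: (asymF h1 hqv).
Qed.


Lemma typ n : arc (b' n) (b' n.+1) || arc (b' n.+1) (b' n).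
Proof. exact: adj (inTb n) (disjS (inTb n.+1)). Qed.

Lemma consF n u w : u \in Tr n.+1 -> w \in Tr n -> ~~ arc w u -> arc u w.
Proof. move=> hu hw; exact: adjF' hu (disjS' hw). Qed.
Lemma consF' n u w : u \in Tr n -> w \in Tr n.+1 -> ~~ arc w u -> arc u w.
Proof. move=> hu hw; exact: adjF' hu (disjS hw). Qed.

Lemma typeA n : arc (b' n) (b' n.+1) ->
  [/\ arc (a' n.+1) (b' n), NN (b' n) (a' n.+1), arc (b' n.+1) (a' n), NN (a' n) (b' n.+1)
    & arc (c' n.+1) (b' n) /\ arc (b' n.+1) (c' n)].
Proof.
move=> hA; case/and4P: (cyc n) => l1 l2 l3 _.
case: (lG l1 hA) => _ h1 h2.
case: (lG (loses_swp l2) hA) => _ _ h3.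
case: (lG (loses_swuv l3) hA) => _ h4 _.
split => //.
- by apply: consF (inTa _) (inTb _) (NN_arc h2).
- by apply: consF (inTb _) (inTa _) (NN_arc h1).
- split; first by apply: consF (inTc _) (inTb _) (NN_arc h3).
  by apply: consF (inTb _) (inTc _) (NN_arc h4).
Qed.

Lemma typeB n : arc (b' n.+1) (b' n) ->
  [/\ NN (b' n) (b' n.+1), arc (a' n.+1) (a' n), NN (a' n) (a' n.+1),
      arc (c' n.+1) (a' n) & arc (a' n.+1) (c' n)] /\
  [/\ arc (b' n) (a' n.+1), arc (b' n) (c' n.+1), arc (a' n) (b' n.+1) & arc (c' n) (b' n.+1)].
Proof.
move=> hB; case/and4P: (cyc n) => l1 l2 l3 _.
case: (lH l1 hB) => h1 h2 h3 h4.
case: (lH (loses_swp l2) hB) => h5 _ _ h6.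
case: (lH (loses_swuv l3) hB) => _ _ h7 h8.
split; split => //.
- by apply: consF (inTa _) (inTa _) (NN_arc h4).
- by apply: consF (inTc _) (inTa _) (NN_arc h6).
- by apply: consF (inTa _) (inTc _) (NN_arc h8).
Qed.


Lemma out_notin n w : arc (b' n) w -> w \notin Tr n.
Proof.
move=> h; apply/negP => /inTrP [] e; subst w.
- by case/and3P: (mp_ab n) => _ _; rewrite h.
- by rewrite (negbTE (irr _)) in h.
- by case/and3P: (mp_bc n) => _; rewrite h.
Qed.

Lemma in_notin n w : arc w (b' n) -> w \notin Tr n.
Proof.
move=> h; apply/negP => /inTrP [] e; subst w.
- by case/and3P: (mp_ab n) => _; rewrite h.
- by rewrite (negbTE (irr _)) in h.
- by case/and3P: (mp_bc n) => _ _; rewrite h.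
Qed.

Lemma fwd n w : arc (b' n) w -> arc (a' n) w -> arc (b' n.+1) w /\ arc (a' n.+1) w.
Proof.
move=> hbw haw.
case/orP: (typ n) => hT.
- case: (typeA hT) => h1 h2 h3 h4 [h5 h6].
  have hw : w \notin Tr n.+1.
    apply/negP => /inTrP [] e; subst w.
    + exact: asymF h1 hbw.
    + exact: asymF h3 haw.
    + exact: asymF h5 hbw.
  split; apply: adjF' hw _; rewrite ?inTa ?inTb //.
  + exact: dom h3 h4 haw.
  + exact: dom h1 h2 hbw.
- case: (typeB hT) => [[h1 h2 h3 h4 h5] _].
  have hw : w \notin Tr n.+1.
    apply/negP => /inTrP [] e; subst w.
    + exact: asymF h2 haw.
    + exact: asymF hT hbw.
    + exact: asymF h4 haw.
  split; apply: adjF' hw _; rewrite ?inTa ?inTb //.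
  + exact: dom hT h1 hbw.
  + exact: dom h2 h3 haw.
Qed.

Lemma bwd n w : arc w (b' n.+1) -> arc w (a' n.+1) -> arc w (b' n) /\ arc w (a' n).
Proof.
move=> hwb hwa.
case/orP: (typ n) => hT.
- case: (typeA hT) => h1 h2 h3 h4 [h5 h6].
  have hw : w \notin Tr n.
    apply/negP => /inTrP [] e; subst w.
    + exact: asymF h3 hwb.
    + exact: asymF h1 hwa.
    + exact: asymF h6 hwb.
  split; apply: adjF hw _; rewrite ?inTa ?inTb //; apply/negP => h.
  + by move: (dom h1 h2 h); rewrite hwa.
  + by move: (dom h3 h4 h); rewrite hwb.
- case: (typeB hT) => [[h1 h2 h3 h4 h5] _].
  have hw : w \notin Tr n.
    apply/negP => /inTrP [] e; subst w.
    + exact: asymF h2 hwa.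
    + exact: asymF hT hwb.
    + exact: asymF h5 hwa.
  split; apply: adjF hw _; rewrite ?inTa ?inTb //; apply/negP => h.
  + by move: (dom hT h1 h); rewrite hwb.
  + by move: (dom h2 h3 h); rewrite hwa.
Qed.

Lemma fwd_iter m n w : arc (b' n) w -> arc (a' n) w -> arc (b' (n + m)) w /\ arc (a' (n + m)) w.
Proof.
elim: m n => [|m IH] n h1 h2; first by rewrite addn0.
case: (fwd h1 h2) => h3 h4. by rewrite addnS -addSn; apply: IH.
Qed.

Lemma bwd_iter m n w : arc w (b' (n + m)) -> arc w (a' (n + m)) -> arc w (b' n) /\ arc w (a' n).
Proof.
elim: m n => [|m IH] n; first by rewrite addn0.
rewrite addnS -addSn => h1 h2. case: (IH _ h1 h2) => h3 h4. exact: bwd.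
Qed.

Lemma modE n m : n %% k = m %% k -> [/\ a' n = a' m, b' n = b' m & c' n = c' m].
Proof. by rewrite /a' /b' /c' => ->. Qed.

Lemma TrE n m : n %% k = m %% k -> Tr n = Tr m.
Proof. by case/modE => e1 e2 e3; rewrite /Tr e1 e2 e3. Qed.

Lemma inK w : w \in K -> exists2 j, j < k & w \in Tr j.
Proof.
case/bigcupP => i _ hi; exists i => //.
by rewrite /Tr /a' /b' /c' modn_small.
Qed.

Lemma Tr_K n x : x \in Tr n -> x \in K.
Proof. move=> h; apply/bigcupP; by exists (Ordinal (ltn_pmod n k0)). Qed.

Lemma shift n j : (n + (j + k - n %% k)) %% k = j %% k.
Proof.
have hr := ltn_pmod n k0.
rewrite {1}(divn_eq n k).
have -> : n %/ k * k + n %% k + (j + k - n %% k) = (n %/ k).+1 * k + j.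
  rewrite mulSn; lia.
by rewrite modnMDl.
Qed.

Lemma Lout n w : w \in K -> arc (b' n) w -> arc (a' n) w -> False.
Proof.
move=> /inK [j hj hwj] h1 h2.
case: (fwd_iter (j + k - n %% k) h1 h2) => h3 _.
move: (out_notin h3). by rewrite (TrE (shift n j)) hwj.
Qed.

Lemma Lin n w : w \in K -> arc w (b' n) -> arc w (a' n) -> False.
Proof.
move=> /inK [j hj hwj] h1 h2.
have e : (j + (n %% k + k - j %% k)) %% k = n %% k.
  by rewrite shift modn_mod.
case: (modE e) => ea eb _.
rewrite -ea in h2; rewrite -eb in h1.
case: (bwd_iter h1 h2) => h3 _.
move: (in_notin h3). by rewrite hwj.
Qed.


Definition O n := outN arc K (b' n).
Definition N2 n := outN2 arc K (b' n).

Lemma inO n w : (w \in O n) = (w \in K) && arc (b' n) w.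
Proof. by rewrite /O !inE (Tr_K (inTb n)). Qed.

Lemma cardU_le (A B : {set T}) : #|A :|: B| <= #|A| + #|B|.
Proof. have := cardsUI A B; lia. Qed.

Lemma card3le (x y z : T) : #|[set x; y; z]| <= 3.
Proof.
have := cardU_le [set x; y] [set z]; rewrite cards1 cards2.
by case: (x != y) => /=; lia.
Qed.

Lemma card_disjU (A B : {set T}) : (forall x, x \in A -> x \notin B) -> #|A :|: B| = #|A| + #|B|.
Proof.
move=> H; have := cardsUI A B.
have -> : A :&: B = set0.
  apply/setP => x; rewrite in_setI in_set0; apply/negP => /andP [h1 h2].
  by move: (H x h1); rewrite h2.
by rewrite cards0 addn0.
Qed.

Lemma L1 n : arc (b' n) (b' n.+1) -> #|K| <= #|O n| + #|N2 n| + 3.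
Proof.
move=> hA; case: (typeA hA) => h1 h2 h3 h4 [h5 h6].
set S := [set b' n; a' n.+1; c' n.+1].
have sub : K \subset (O n :|: N2 n) :|: S.
  apply/subsetP => w hw.
  rewrite in_setU; apply/orP.
  case: (boolP (w \in S)) => hS; [by right|left].
  rewrite in_setU; apply/orP.
  case: (boolP (w \in O n)) => hO; [by left|right].
  move: hS; rewrite /S !inE !negb_or => /andP [/andP [hb ha] hc].
  have hb1O : b' n.+1 \in O n by rewrite inO (Tr_K (inTb _)).
  have key : arc (b' n.+1) w.
    case: (boolP (w \in Tr n)) => hwT.
    - case/inTrP: hwT => e; subst w => //. by rewrite eqxx in hb.
    have hwn1 : w \notin Tr n.+1.
      apply/negP => /inTrP [] e; subst w.
      + by rewrite eqxx in ha.
      + by rewrite hb1O in hO.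
      + by rewrite eqxx in hc.
    apply: adjF' (inTb n.+1) hwn1 _; apply/negP => hwb1.
    have hwb : arc w (b' n).
      apply: adjF (inTb n) hwT _; apply/negP => h; by move: hO; rewrite inO hw h.
    have hwa : arc w (a' n).
      apply: adjF (inTa n) hwT _; apply/negP => h; by move: (dom h3 h4 h); rewrite hwb1.
    by case: (Lin hw hwb hwa).
  have hnb : ~~ arc (b' n) w by apply/negP => h; move: hO; rewrite inO hw h.
  have hb1O' : b' n.+1 \in outN arc K (b' n) := hb1O.
  rewrite hw (Tr_K (inTb n)) (negbTE hnb) hb /=.
  by apply/existsP; exists (b' n.+1); rewrite hb1O' key.
have := subset_leq_card sub.
have := cardU_le (O n :|: N2 n) S.
have := cardU_le (O n) (N2 n).
have := card3le (b' n) (a' n.+1) (c' n.+1).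
rewrite -/S; lia.
Qed.


Lemma L2 n : arc (b' n) (b' n.+1) -> #|O n| + #|O n.+1| + 3 <= #|K|.
Proof.
move=> hA; case: (typeA hA) => h1 h2 h3 h4 [h5 h6].
set S := [set b' n; a' n.+1; c' n.+1].
have cS : #|S| = 3.
  rewrite /S card_disjU ?cards1 ?cards2.
    by rewrite eq_sym (arc_neq h1).
  move=> x; rewrite !inE => /orP [] /eqP ->.
  - by rewrite eq_sym (arc_neq h5).
  - exact: mp_ac.
have d1 : forall x, x \in O n -> x \notin S.
  move=> x; rewrite inO => /andP [_ hx]; rewrite /S !inE.
  apply/negP => /orP [/orP []|] /eqP e; subst x.
  - by rewrite (negbTE (irr _)) in hx.
  - exact: asymF h1 hx.
  - exact: asymF h5 hx.
have d2 : forall x, x \in O n :|: S -> x \notin O n.+1.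
  move=> x; rewrite in_setU => /orP [hx|hx]; apply/negP; rewrite inO => /andP [hxK hbx].
  - move: hx; rewrite inO => /andP [_ hbnx].
    have hxT := out_notin hbx.
    have hax : arc (a' n.+1) x.
      apply: adjF' (inTa n.+1) hxT _. exact: dom h1 h2 hbnx.
    exact: Lout hxK hbx hax.
  - move: hx; rewrite /S !inE => /orP [/orP []|] /eqP e; subst x.
    + exact: asymF hA hbx.
    + by move: (out_notin hbx); rewrite inTa.
    + by move: (out_notin hbx); rewrite inTc.
have sub : (O n :|: S) :|: O n.+1 \subset K.
  apply/subsetP => x; rewrite !in_setU => /orP [/orP [|]|].
  - by rewrite inO => /andP [].
  - rewrite /S !inE => /orP [/orP []|] /eqP ->; [exact: Tr_K (inTb n)|exact: Tr_K (inTa n.+1)|exact: Tr_K (inTc n.+1)].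
  - by rewrite inO => /andP [].
have := subset_leq_card sub.
rewrite card_disjU // card_disjU // cS. lia.
Qed.

Lemma L3 n : arc (b' n.+1) (b' n) -> #|O n.+1| < #|O n|.
Proof.
move=> hB; case: (typeB hB) => [[h1 h2 h3 h4 h5] [g1 g2 g3 g4]].
set S2 := [set a' n.+1; c' n.+1].
have cS : #|S2| = 2 by rewrite /S2 cards2 (mp_ac (n.+1)).
have d1 : forall x, x \in O n.+1 -> x \notin S2.
  move=> x; rewrite inO => /andP [_ hx]; rewrite /S2 !inE.
  apply/negP => /orP [] /eqP e; subst x; move: (out_notin hx).
  - by rewrite inTa.
  - by rewrite inTc.
have sub : O n.+1 :|: S2 \subset O n :|: [set b' n].
  apply/subsetP => x; rewrite !in_setU => /orP [hx|hx].
  - move: hx; rewrite inO => /andP [hxK hbx].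
    case: (eqVneq x (b' n)) => [->|hne]; first by rewrite inE eqxx orbT.
    apply/orP; left; rewrite inO hxK /=.
    case: (boolP (x \in Tr n)) => hxT.
    + case/inTrP: hxT => e; subst x.
      * by case: (asymF g3 hbx).
      * by rewrite eqxx in hne.
      * by case: (asymF g4 hbx).
    apply: (adjF' (inTb n) hxT); apply/negP => hxb.
    have hxT1 := out_notin hbx.
    have hxa1 : arc x (a' n.+1).
      apply: adjF (inTa n.+1) hxT1 _; apply/negP => h; exact: Lout hxK hbx h.
    have hxa : arc x (a' n).
      apply: adjF (inTa n) hxT _; apply/negP => h; by move: (dom h2 h3 h); rewrite hxa1.
    exact: Lin hxK hxb hxa.
  - apply/orP; left; rewrite /S2 !inE in hx; case/orP: hx => /eqP ->; rewrite inO ?(Tr_K (inTa _)) ?(Tr_K (inTc _)) //.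
have := subset_leq_card sub.
have := cardU_le (O n) [set b' n].
rewrite (card_disjU d1) cS cards1. lia.
Qed.


Lemma O_mod n m : n %% k = m %% k -> O n = O m.
Proof. by case/modE => _ e _; rewrite /O e. Qed.

Lemma main_ex : exists2 t, t < k &
  #|outN arc (KC k a b c) (b t)| <= #|outN2 arc (KC k a b c) (b t)|.
Proof.
suff [n hA hn] : exists2 n, arc (b' n) (b' n.+1) & 2 * #|O n| + 3 <= #|K|.
  exists (n %% k); first by move: (ltn_pmod n k0) => h; exact h.
  change (#|O n| <= #|N2 n|). have := L1 hA. lia.
case: (boolP [exists t : 'I_k, arc (b' t) (b' t.+1) && (2 * #|O t| + 3 <= #|K|)]).
  by case/existsP => t /andP [h1 h2]; exists t.
move=> hno.
have em : forall n, n %% k %% k = n %% k by move=> n; rewrite modn_mod.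
have emS : forall n, (n %% k).+1 %% k = n.+1 %% k by move=> n; rewrite -addn1 modnDml addn1.
have H : forall n, arc (b' n) (b' n.+1) -> #|K| < 2 * #|O n| + 3.
  move=> n hA; rewrite ltnNge; apply/negP => hle; move/negP: hno; apply.
  apply/existsP; exists (Ordinal (ltn_pmod n k0)) => /=.
  case: (modE (em n)) => _ e1 _; case: (modE (emS n)) => _ e2 _.
  by rewrite e1 e2 (O_mod (em n)) hA hle.
have Ok : forall n, #|O (n + k)| = #|O n|.
  by move=> n; rewrite (O_mod (m := n)) // modnDr.
case: (boolP [exists t : 'I_k, arc (b' t) (b' t.+1)]).
- case/existsP => s hs.
  have h1 := H _ hs; have h2 := L2 hs.
  have claim : forall m, 2 * #|O (s.+1 + m)| + 3 < #|K|.
    elim => [|m IH]; first by rewrite addn0; lia.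
    case/orP: (typ (s.+1 + m)) => hT.
    + have := H _ hT. lia.
    + have := L3 hT. have -> : s.+1 + m.+1 = (s.+1 + m).+1 by rewrite addnS. lia.
  have := claim k.-1.
  have -> : s.+1 + k.-1 = s + k by have := k0; lia.
  rewrite Ok. lia.
- move=> hno2.
  have hB : forall n, #|O n.+1| < #|O n|.
    move=> n; apply: L3.
    case/orP: (typ n) => // hA; move/negP: hno2; case.
    apply/existsP; exists (Ordinal (ltn_pmod n k0)) => /=.
    case: (modE (em n)) => _ e1 _; case: (modE (emS n)) => _ e2 _.
    by rewrite e1 e2.
  have claim : forall m, #|O m| + m <= #|O 0|.
    elim => [|m IH]; first by rewrite addn0.
    have := hB m; lia.
  have := claim k. have := Ok 0. rewrite add0n => ->. have := k0. lia.
Qed.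

End Proof.

Theorem proposition4p12 (T : finType) (arc : rel T) (k : nat) (a b c : nat -> T) :
  tmdp arc -> double_cycle arc k a b c ->
  exists2 t, t < k &
    #|outN arc (KC k a b c) (b t)| <= #|outN2 arc (KC k a b c) (b t)|.
Proof. move=> H1 H2; exact: main_ex H1 H2. Qed.
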